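(* Consider the consistent-read asynchronous iteration defined in the context with step size $\beta=1$, an arbitrary deterministic starting vector $x_0$, a nonnegative integer $\tau$, and deterministic delay indices $k(j)$ satisfying $j-\tau\le k(j)\le j$ for all $j$. Let $\rho=\frac1n\|A\|_\infty=\max_{l}\frac1n\sum_{r=1}^n|A_{lr}|$, and suppose $2\rho\tau<1$. Set $\nu_\tau=1-2\rho\tau$. Then: (a) For every integer $m\ge \frac{\log(1/2)}{\log(1-\lambda_{\max}/n)}$, \[E_m\le\Big(1-\frac{\nu_\tau}{2\kappa}\Big)E_0.\] (b) Let $T_0=\big\lceil \frac{\log(1/2)}{\log(1-\lambda_{\max}/n)}\big\rceil$, $T=T_0+\tau$, and \[\chi=\frac{\rho\tau^2\lambda_{\max}(1-\lambda_{\max}/n)^{-2\tau}}{n}.\] Then for every integer $r\ge1$ and every $m\ge rT$, \[E_m\le\Big(1-\frac{\nu_\tau}{2\kappa}\Big)\Big(1-\frac{\nu_\tau(1-\lambda_{\max}/n)^{\tau}}{2\kappa}+\chi\Big)^{r-1}E_0.\]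
   Context: Let $n\ge2$ and let $A\in\mathbb{R}^{n\times n}$ be symmetric positive definite with all diagonal entries equal to $1$; let $b\in\mathbb{R}^n$ and $x^\star=A^{-1}b$. Let $\lambda_{\min},\lambda_{\max}$ be the smallest and largest eigenvalues of $A$ and $\kappa=\lambda_{\max}/\lambda_{\min}$. Write $(x,y)_A=y^TAx$ and $\|x\|_A=\sqrt{(x,x)_A}$; $e^{(1)},\dots,e^{(n)}$ are the standard basis vectors. Consistent-read iteration: let $d_0,d_1,\dots$ be i.i.d. random vectors, each uniformly distributed on $\{e^{(1)},\dots,e^{(n)}\}$; let $\tau\ge0$ be an integer and $k(0),k(1),\dots$ deterministic integers (not depending on the $d_j$) with $j-\tau\le k(j)\le j$; given $x_0\in\mathbb{R}^n$ and a step size $\beta$, define for $j\ge0$ \[\gamma_j=(x^\star-x_{k(j)},d_j)_A,\qquad x_{j+1}=x_j+\beta\gamma_jd_j.\] (Note $\gamma_j=d_j^T(b-Ax_{k(j)})$.) Define $E_m=\mathbb{E}[\|x_m-x^\star\|_A^2]$. *)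

(* Defs.v *)
(* classical reals. Indices 0..n-1; vectors nat -> R; matrices nat -> nat -> R. *)
From Stdlib Require Import Reals Lra Lia ZArith.
Open Scope R_scope.

Fixpoint rsum (n : nat) (f : nat -> R) : R :=
  match n with
  | O => 0
  | S k => rsum k f + f k
  end.

Fixpoint rmax_upto (k : nat) (f : nat -> R) : R :=
  match k with
  | O => f O
  | S j => Rmax (rmax_upto j f) (f (S j))
  end.

Definition matvec (n : nat) (A : nat -> nat -> R) (v : nat -> R) (i : nat) : R :=
  rsum n (fun r => A i r * v r).

Definition inprodA (n : nat) (A : nat -> nat -> R) (x y : nat -> R) : R :=
  rsum n (fun i => y i * matvec n A x i).

Definition normA2 (n : nat) (A : nat -> nat -> R) (x : nat -> R) : R :=
  inprodA n A x x.

Definition ebasis (i : nat) : nat -> R := fun r => if Nat.eqb r i then 1 else 0.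

Definition is_eigenvalue (n : nat) (A : nat -> nat -> R) (lam : R) : Prop :=
  exists v : nat -> R, (exists i, (i < n)%nat /\ v i <> 0) /\
    forall i, (i < n)%nat -> matvec n A v i = lam * v i.

Definition norm_inf (n : nat) (A : nat -> nat -> R) : R :=
  rmax_upto (n - 1) (fun l => rsum n (fun r => Rabs (A l r))).

(* History of the consistent-read iteration driven by the index sequence s
   (d_j = e^(s j)).  hist ... j i = x_i for i <= j. *)
Fixpoint hist (n : nat) (A : nat -> nat -> R) (xstar x0 : nat -> R) (beta : R)
  (k : nat -> nat) (s : nat -> nat) (j : nat) : nat -> (nat -> R) :=
  match j with
  | O => fun _ => x0
  | S j' =>
      let H := hist n A xstar x0 beta k s j' in
      let xk := H (k j') in
      let d := ebasis (s j') in
      let gamma := inprodA n A (fun r => xstar r - xk r) d in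
      fun i => if Nat.leb i j' then H i
               else (fun r => H j' r + beta * gamma * d r)
  end.

Definition iterate (n : nat) (A : nat -> nat -> R) (xstar x0 : nat -> R) (beta : R)
  (k : nat -> nat) (s : nat -> nat) (m : nat) : nat -> R :=
  hist n A xstar x0 beta k s m m.

Definition upd (s : nat -> nat) (m i : nat) : nat -> nat :=
  fun j => if Nat.eqb j m then i else s j.

(* Expectation over i.i.d. uniform choices s 0, ..., s (m-1) in {0..n-1}:
   (1/n^m) * sum over all such sequences. *)
Fixpoint expect_seq (n m : nat) (F : (nat -> nat) -> R) : R :=
  match m with
  | O => F (fun _ => O)
  | S m' => / INR n * rsum n (fun i => expect_seq n m' (fun s => F (upd s m' i)))
  end.

Definition Em (n : nat) (A : nat -> nat -> R) (xstar x0 : nat -> R) (beta : R)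
  (k : nat -> nat) (m : nat) : R :=
  expect_seq n m (fun s =>
    normA2 n A (fun r => iterate n A xstar x0 beta k s m r - xstar r)).

Definition Rceil (x : R) : Z := (1 - up (- x))%Z.

(* Main.v *)
Require Import Defs.
From Stdlib Require Import Reals Lra Lia ZArith FunctionalExtensionality.
Open Scope R_scope.
From mathcomp Require all_boot all_order all_algebra.
From mathcomp Require complex spectral.
From mathcomp Require Rstruct.
From mathcomp Require ring.

Definition spec_prop (n : nat) (A : nat -> nat -> R) (lmin lmax : R) : Prop :=
  (forall i j, (i < n)%nat -> (j < n)%nat -> A i j = A j i) ->
  (forall lam, is_eigenvalue n A lam -> lmin <= lam <= lmax) ->
  forall x : nat -> R, exists c d : nat -> R,
    (forall j, (j < n)%nat -> 0 <= c j /\ lmin <= d j <= lmax) /\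
    rsum n (fun i => x i * x i) = rsum n c /\
    normA2 n A x = rsum n (fun j => d j * c j) /\
    rsum n (fun i => matvec n A x i * matvec n A x i) = rsum n (fun j => d j * d j * c j).
Module Spec.
Import all_boot all_order all_algebra complex sesquilinear spectral Rstruct.
Import ring.
Import Order.TTheory GRing.Theory Num.Theory.
Local Open Scope ring_scope.
Local Open Scope complex_scope.
Local Open Scope sesquilinear_scope.
Notation C := (complex R : numClosedFieldType).
Notation ReC := (@complex.Re R).
Notation ImC := (@complex.Im R).
Lemma rsumE n (f : nat -> R) : rsum n f = \sum_(i < n) f i.
Proof.
elim: n => [|n IH]; first by rewrite big_ord0.
by rewrite big_ord_recr /= IH.
Qed.
Lemma conj_real (x : R) : Num.conj (x%:C : C) = x%:C.
Proof. exact: conjc_real. Qed.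
Lemma Re_sum n (F : 'I_n -> C) : ReC (\sum_(i < n) F i) = \sum_(i<n) ReC (F i).
Proof. elim/big_rec2: _ => [//|i y z _ <-]. by case: (F i); case: z. Qed.
Lemma Im_sum n (F : 'I_n -> C) : ImC (\sum_(i < n) F i) = \sum_(i<n) ImC (F i).
Proof. elim/big_rec2: _ => [//|i y z _ <-]. by case: (F i); case: z. Qed.
Lemma ReM_real (a : R) (w : C) : ReC (a%:C * w) = a * ReC w.
Proof. by case: w => c d /=; rewrite mul0r subr0. Qed.
Lemma ImM_real (a : R) (w : C) : ImC (a%:C * w) = a * ImC w.
Proof. by case: w => c d /=; rewrite mul0r addr0. Qed.

Section S.
Variable N : nat.
Variable P : 'M[C]_N.
Hypothesis HP : P \is unitarymx.

Lemma entry_form (f : 'rV[C]_N) i r :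
  (P^t* *m diag_mx f *m P) i r = \sum_j Num.conj (P j i) * f 0 j * P j r.
Proof.
rewrite mul_mx_diag !mxE; apply: eq_bigr => j _; rewrite !mxE //.
Qed.

Variable x : 'I_N -> R.
Definition xv i : C := (x i)%:C.
Definition Z j := \sum_r P j r * xv r.
Definition qf (Q : 'M[C]_N) := \sum_i \sum_r xv i * Q i r * xv r.

Lemma conjZ j : Num.conj (Z j) = \sum_i Num.conj (P j i) * xv i.
Proof.
rewrite /Z rmorph_sum; apply: eq_bigr => i _; by rewrite rmorphM /= /xv conj_real.
Qed.

Lemma qf_form (f : 'rV[C]_N) :
  qf (P^t* *m diag_mx f *m P) = \sum_j f 0 j * (Num.conj (Z j) * Z j).
Proof.
rewrite /qf.
under eq_bigr => i _ do under eq_bigr => r _ do rewrite entry_form mulr_sumr mulr_suml.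
under eq_bigr => i _ do rewrite exchange_big /=.
rewrite exchange_big /=.
apply: eq_bigr => j _.
rewrite conjZ /Z mulr_suml mulr_sumr; apply: eq_bigr => i _.
rewrite mulr_sumr mulr_sumr; apply: eq_bigr => r _.
ring.
Qed.
Lemma PtP : P^t* *m P = 1%:M.
Proof. by have := mulmxKtV 1%:M HP erefl; rewrite mul1mx. Qed.

Lemma qf_id : qf 1%:M = \sum_i xv i * xv i.
Proof.
rewrite /qf; apply: eq_bigr => i _.
rewrite (bigD1 i) //= mxE eqxx mulr1 big1 ?addr0 // => r /negPf ri.
by rewrite mxE eq_sym ri mulr0 mul0r.
Qed.
End S.

Lemma RmultE (a b : R) : Rmult a b = (a * b)%R. Proof. by []. Qed.
Lemma RplusE (a b : R) : Rplus a b = (a + b)%R. Proof. by []. Qed.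

Lemma eig_of (n' : nat) (A : nat -> nat -> R) (u : 'I_n'.+1 -> R) (dl : R)
  (i0 : 'I_n'.+1) : u i0 != 0 ->
  (forall r : 'I_n'.+1, \sum_(i < n'.+1) (A r i * u i)%R = (dl * u r)%R) ->
  is_eigenvalue n'.+1 A dl.
Proof.
move=> u0 H; exists (fun t => u (inord t)); split.
  exists i0; split; first by apply/ssrnat.ltP; exact: ltn_ord.
  by rewrite inord_val; apply/eqP.
move=> t /ssrnat.ltP Ht; rewrite /matvec rsumE.
have := H (inord t); rewrite inordK // => HH.
etransitivity; last exact: HH.
by apply: eq_bigr => i _; rewrite inord_val.
Qed.


Lemma spec_ok n A lmin lmax : spec_prop n A lmin lmax.
Proof.
rewrite /spec_prop => hsym hspec x.
case: n hsym hspec => [|n'] hsym hspec.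
  by exists (fun _ => 0%R), (fun _ => 0%R); split => // j Hj; lia.
pose N := n'.+1.
pose Am : 'M[C]_N := \matrix_(i, j) (A i j)%:C.
have Asym : forall i j : 'I_N, A i j = A j i.
  by move=> i j; apply: hsym; apply/ssrnat.ltP.
have Am_herm : Am \is hermsymmx.
  apply: realsym_hermsym.
    apply/is_hermitianmxP; rewrite expr0 scale1r.
    by apply/matrixP => i j; rewrite !mxE Asym.
  by apply/mxOverP => i j; rewrite mxE; apply/complex_realP; exists (A i j).
pose P := spectralmx Am; pose D := spectral_diag Am.
have HP : P \is unitarymx := spectral_unitarymx Am.
move/orthomx_spectralP: (hermitian_normalmx Am_herm) => HAm.
rewrite -/P -/D invmx_unitary // in HAm.
have Dreal : D \is a realmx := hermitian_spectral_diag_real Am_herm.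
pose xr : 'I_N -> R := fun i => x i.
pose c (j : 'I_N) : R := (ReC (Z N P xr j) ^+ 2 + ImC (Z N P xr j) ^+ 2)%R.
pose d (j : 'I_N) : R := ReC (D 0 j).
have cC : forall j, (c j)%:C = Num.conj (Z N P xr j) * Z N P xr j.
  by move=> j; rewrite add_Re2_Im2 sqr_normc mulrC.
have dC : forall j, (d j)%:C = D 0 j.
  by move=> j; apply: RRe_real; apply: (mxOverP Dreal).
have PAm : P *m Am = diag_mx D *m P.
  by rewrite {1}HAm !mulmxA (unitarymxP HP) mul1mx.
exists (fun j => c (inord j)), (fun j => d (inord j)).
split.
  move=> j Hj; split.
    by apply/RleP; rewrite addr_ge0 // sqr_ge0.
  apply: hspec.
  set jj : 'I_N := inord j.
  have E : forall r, \sum_i P jj i * Am i r = D 0 jj * P jj r.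
    move=> r; move/matrixP/(_ jj r): PAm.
    by rewrite /= mul_diag_mx !mxE.
  have ERe : forall r : 'I_N, \sum_(i < N) (A r i * ReC (P jj i))%R = (d jj * ReC (P jj r))%R.
    move=> r; have := congr1 ReC (E r); rewrite Re_sum -dC ReM_real => <-.
    by apply: eq_bigr => i _; rewrite mxE [in RHS]mulrC ReM_real Asym.
  have EIm : forall r : 'I_N, \sum_(i < N) (A r i * ImC (P jj i))%R = (d jj * ImC (P jj r))%R.
    move=> r; have := congr1 ImC (E r); rewrite Im_sum -dC ImM_real => <-.
    by apply: eq_bigr => i _; rewrite mxE [in RHS]mulrC ImM_real Asym.
  have [i0 Hi0] : exists i0, P jj i0 != 0.
    have : (P *m P^t*) jj jj = 1 by rewrite (unitarymxP HP) mxE eqxx.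
    rewrite mxE => H1.
    case: (pickP [pred i | P jj i != 0]) => [i0 Hi0|H0]; first by exists i0.
    exfalso; move: H1; rewrite big1 => [|i _].
      by move/eqP; rewrite eq_sym oner_eq0.
    by have := H0 i; rewrite /= => /negbFE/eqP ->; rewrite mul0r.
  move: Hi0 ERe EIm; case E0: (P jj i0) => [a b] Hab ERe EIm.
  case: (eqVneq a 0) => [a0|an0].
    apply: (@eig_of n' A (fun i => ImC (P jj i)) _ i0); last exact: EIm.
    rewrite E0 /=; apply: contra Hab => /eqP b0; by rewrite a0 b0.
  apply: (@eig_of n' A (fun i => ReC (P jj i)) _ i0); last exact: ERe.
  by rewrite E0.
split.
  rewrite !rsumE; apply: complexI; rewrite !rmorph_sum /=.
  transitivity (qf N xr 1%:M).
    by rewrite qf_id; apply: eq_bigr => i _; rewrite RmultE rmorphM.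
  have -> : (1%:M : 'M[C]_N) = P^t* *m diag_mx (const_mx 1) *m P.
    by rewrite diag_const_mx mulmx1 (PtP _ _ HP).
  rewrite qf_form; apply: eq_bigr => j _; by rewrite mxE mul1r -cC inord_val.
split.
  rewrite /normA2 /inprodA /matvec !rsumE.
  under eq_bigr => i _ do rewrite rsumE.
  apply: complexI; rewrite !rmorph_sum /=.
  transitivity (qf N xr Am).
    rewrite /qf; apply: eq_bigr => i _.
    rewrite RmultE rmorphM rmorph_sum mulr_sumr /=; apply: eq_bigr => r _.
    by rewrite !RmultE !rmorphM mxE /xv /xr mulrA.
  rewrite {1}HAm qf_form; apply: eq_bigr => j _.
  by rewrite inord_val RmultE rmorphM -dC -cC.
have AmAm : Am *m Am = P^t* *m diag_mx (\row_j (D 0 j * D 0 j)) *m P.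
  rewrite HAm -!mulmxA (mulmxA P) (unitarymxP HP) mul1mx.
  by rewrite (mulmxA (diag_mx D)) mulmx_diag mulmxA.
rewrite /matvec !rsumE.
under eq_bigr => i _ do rewrite rsumE.
apply: complexI; rewrite !rmorph_sum /=.
transitivity (qf N xr (Am *m Am)).
  rewrite /qf.
  under [RHS]eq_bigr => i _ do under eq_bigr => r _ do rewrite mxE mulr_sumr mulr_suml.
  under eq_bigr => s _ do rewrite RmultE rmorphM !rmorph_sum mulr_suml.
  under eq_bigr => s _ do under eq_bigr => i _ do rewrite mulr_sumr.
  rewrite exchange_big /=.
  apply: eq_bigr => i _; rewrite exchange_big /=.
  apply: eq_bigr => r _; apply: eq_bigr => s _.
  rewrite !mxE !RmultE !rmorphM /xv /xr (Asym s i).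
  ring.
rewrite AmAm qf_form; apply: eq_bigr => j _.
by rewrite mxE inord_val !RmultE !rmorphM -dC -cC.
Qed.
End Spec.

Open Scope R_scope.

Lemma rsum_ext n f g : (forall i, (i < n)%nat -> f i = g i) -> rsum n f = rsum n g.
Proof.
  induction n; intros H; simpl; [reflexivity|].
  rewrite IHn by (intros; apply H; lia). rewrite H by lia. reflexivity.
Qed.

Lemma rsum_plus n f g : rsum n (fun i => f i + g i) = rsum n f + rsum n g.
Proof. induction n; simpl; [lra|]. rewrite IHn. lra. Qed.

Lemma rsum_minus n f g : rsum n (fun i => f i - g i) = rsum n f - rsum n g.
Proof. induction n; simpl; [lra|]. rewrite IHn. lra. Qed.

Lemma rsum_scal n c f : rsum n (fun i => c * f i) = c * rsum n f.
Proof. induction n; simpl; [lra|]. rewrite IHn. lra. Qed.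

Lemma rsum_le n f g : (forall i, (i < n)%nat -> f i <= g i) -> rsum n f <= rsum n g.
Proof.
  induction n; intros H; simpl; [lra|].
  assert (rsum n f <= rsum n g) by (apply IHn; intros; apply H; lia).
  assert (f n <= g n) by (apply H; lia). lra.
Qed.

Lemma rsum_nonneg n f : (forall i, (i < n)%nat -> 0 <= f i) -> 0 <= rsum n f.
Proof.
  intros H. replace 0 with (rsum n (fun _ => 0)).
  - apply rsum_le. exact H.
  - induction n; simpl; [reflexivity|]. rewrite IHn; [lra|]. intros; apply H; lia.
Qed.

Lemma rsum_const n c : rsum n (fun _ => c) = INR n * c.
Proof. induction n; simpl rsum; [simpl; lra|]. rewrite IHn, S_INR. lra. Qed.

Lemma rsum_swap n m (F : nat -> nat -> R) :
  rsum n (fun i => rsum m (fun j => F i j)) = rsum m (fun j => rsum n (fun i => F i j)).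
Proof.
  induction n; simpl.
  - rewrite rsum_const. simpl. lra.
  - rewrite IHn. rewrite <- rsum_plus. reflexivity.
Qed.

Lemma rsum_pos n f q : (forall i, (i < n)%nat -> 0 <= f i) -> (q < n)%nat -> 0 < f q -> 0 < rsum n f.
Proof.
  induction n; intros H Hq Hf; [lia|]. simpl.
  destruct (Nat.eq_dec q n) as [->|Hne].
  - assert (0 <= rsum n f) by (apply rsum_nonneg; intros; apply H; lia). lra.
  - assert (0 < rsum n f). { apply IHn. intros; apply H; lia. lia. exact Hf. }
    assert (0 <= f n) by (apply H; lia). lra.
Qed.

Lemma rsum_ebasis n p f :
  rsum n (fun i => ebasis p i * f i) = if Nat.ltb p n then f p else 0.
Proof.
  induction n; simpl; [reflexivity|]. rewrite IHn. unfold ebasis.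
  destruct (Nat.ltb p n) eqn:E1; destruct (Nat.ltb p (S n)) eqn:E2;
  destruct (Nat.eqb n p) eqn:E3;
  apply Nat.ltb_lt in E1 || apply Nat.ltb_ge in E1;
  apply Nat.ltb_lt in E2 || apply Nat.ltb_ge in E2;
  apply Nat.eqb_eq in E3 || apply Nat.eqb_neq in E3; try lia; subst; lra.
Qed.

Lemma rsum_ebasis_lt n p f : (p < n)%nat -> rsum n (fun i => ebasis p i * f i) = f p.
Proof. intros H. rewrite rsum_ebasis. apply Nat.ltb_lt in H. rewrite H. reflexivity. Qed.

Lemma rsum_ebasis_r n p f : (p < n)%nat -> rsum n (fun i => f i * ebasis p i) = f p.
Proof.
  intros H. rewrite <- (rsum_ebasis_lt n p f H). apply rsum_ext. intros; lra.
Qed.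

Lemma rsum_abs n f : Rabs (rsum n f) <= rsum n (fun i => Rabs (f i)).
Proof.
  induction n; simpl. rewrite Rabs_R0; lra.
  eapply Rle_trans; [apply Rabs_triang|]. lra.
Qed.

Lemma rsum_shift n h : rsum (S n) h = h O + rsum n (fun d => h (S d)).
Proof. induction n; simpl in *; [lra|]. rewrite IHn. lra. Qed.

Lemma rsum_extend M T h h' : (M <= T)%nat -> (forall d, (d < M)%nat -> h d = h' d) ->
  (forall d, (d < T)%nat -> 0 <= h' d) -> rsum M h <= rsum T h'.
Proof.
  intros HMT Heq Hnn. induction T.
  - assert (M = 0%nat) by lia. subst. simpl. lra.
  - destruct (Nat.eq_dec M (S T)) as [->|Hne].
    + right. apply rsum_ext. exact Heq.
    + simpl. assert (rsum M h <= rsum T h') by (apply IHT; [lia| intros; apply Hnn; lia]).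
      assert (0 <= h' T) by (apply Hnn; lia). lra.
Qed.

Section Expect.
Variable n : nat.
Hypothesis hn : (1 <= n)%nat.

Lemma INRn_pos : 0 < INR n.
Proof. apply lt_0_INR. lia. Qed.

Lemma Ex_ext m F G : (forall s, F s = G s) -> expect_seq n m F = expect_seq n m G.
Proof. intros H. assert (F = G) by (apply functional_extensionality; exact H). subst; reflexivity. Qed.

Lemma Ex_plus m : forall F G, expect_seq n m (fun s => F s + G s) = expect_seq n m F + expect_seq n m G.
Proof.
  induction m; intros F G; simpl; [reflexivity|].
  rewrite (rsum_ext n _ (fun i => expect_seq n m (fun s => F (upd s m i)) + expect_seq n m (fun s => G (upd s m i)))).
  - rewrite rsum_plus. lra.
  - intros i _. apply IHm.
Qed.

Lemma Ex_scal m : forall c F, expect_seq n m (fun s => c * F s) = c * expect_seq n m F.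
Proof.
  induction m; intros c F; simpl; [reflexivity|].
  rewrite (rsum_ext n _ (fun i => c * expect_seq n m (fun s => F (upd s m i)))).
  - rewrite rsum_scal. lra.
  - intros i _. apply IHm.
Qed.

Lemma Ex_le m : forall F G, (forall s, F s <= G s) -> expect_seq n m F <= expect_seq n m G.
Proof.
  induction m; intros F G H; simpl; [apply H|].
  apply Rmult_le_compat_l.
  - left. apply Rinv_0_lt_compat. apply INRn_pos.
  - apply rsum_le. intros i _. apply IHm. intros s. apply H.
Qed.

Lemma Ex_const m c : expect_seq n m (fun _ => c) = c.
Proof.
  induction m; simpl; [reflexivity|].
  rewrite (rsum_ext n _ (fun _ => c)) by (intros; apply IHm).
  rewrite rsum_const. field. apply Rgt_not_eq. apply INRn_pos.
Qed.

Lemma Ex_rsum m N : forall (F : nat -> (nat -> nat) -> R),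
  expect_seq n m (fun s => rsum N (fun l => F l s)) = rsum N (fun l => expect_seq n m (F l)).
Proof.
  induction N; intros F; simpl.
  - apply Ex_const.
  - rewrite Ex_plus. rewrite IHN. reflexivity.
Qed.

Lemma Ex_step m F : expect_seq n (S m) F =
  expect_seq n m (fun s => / INR n * rsum n (fun i => F (upd s m i))).
Proof.
  simpl. rewrite Ex_scal. f_equal. rewrite Ex_rsum. reflexivity.
Qed.

Definition dep_below (j : nat) (F : (nat -> nat) -> R) : Prop :=
  forall s s', (forall i, (i < j)%nat -> s i = s' i) -> F s = F s'.

Lemma Ex_lift j F : dep_below j F -> forall d, expect_seq n (j + d) F = expect_seq n j F.
Proof.
  intros HF d. induction d.
  - rewrite Nat.add_0_r. reflexivity.
  - rewrite Nat.add_succ_r. simpl.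
    rewrite (rsum_ext n _ (fun _ => expect_seq n (j + d) F)).
    + rewrite rsum_const, IHd. field. apply Rgt_not_eq. apply INRn_pos.
    + intros i _. apply Ex_ext. intros s. apply HF. intros i0 Hi0. unfold upd.
      destruct (Nat.eqb i0 (j + d)) eqn:E; [apply Nat.eqb_eq in E; lia|reflexivity].
Qed.

Lemma Ex_lift' j m F : dep_below j F -> (j <= m)%nat -> expect_seq n m F = expect_seq n j F.
Proof.
  intros HF Hjm. replace m with (j + (m - j))%nat by lia. apply Ex_lift. exact HF.
Qed.
End Expect.


Section Iter.
Variable n : nat.
Variable A : nat -> nat -> R.
Variables xstar x0 : nat -> R.
Variable k : nat -> nat.
Hypothesis hk : forall j, (k j <= j)%nat.

Notation hist' := (hist n A xstar x0 1 k).
Notation X := (iterate n A xstar x0 1 k).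

Lemma hist_le s j : forall i, (i <= j)%nat -> hist' s j i = hist' s i i.
Proof.
  induction j; intros i Hi.
  - assert (i = 0%nat) by lia. subst. reflexivity.
  - destruct (Nat.eq_dec i (S j)) as [->|Hne]; [reflexivity|].
    simpl. assert (Nat.leb i j = true) by (apply Nat.leb_le; lia). rewrite H.
    apply IHj. lia.
Qed.

Lemma X_step s j : X s (S j) = fun r => X s j r +
   1 * inprodA n A (fun r => xstar r - X s (k j) r) (ebasis (s j)) * ebasis (s j) r.
Proof.
  unfold iterate. apply functional_extensionality; intro r.
  change (hist' s (S j) (S j) r) with ((if Nat.leb (S j) j then hist' s j (S j) else
     (fun r => hist' s j j r + 1 * inprodA n A (fun r => xstar r - hist' s j (k j) r)
        (ebasis (s j)) * ebasis (s j) r)) r).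
  replace (Nat.leb (S j) j) with false by (symmetry; apply Nat.leb_gt; lia).
  rewrite (hist_le s j (k j)) by apply hk. reflexivity.
Qed.

Lemma hist_dep j : forall s s', (forall i, (i < j)%nat -> s i = s' i) -> hist' s j = hist' s' j.
Proof.
  induction j; intros s s' H; [reflexivity|].
  simpl. rewrite (IHj s s') by (intros; apply H; lia).
  rewrite (H j) by lia. reflexivity.
Qed.

Lemma X_dep j s s' : (forall i, (i < j)%nat -> s i = s' i) -> X s j = X s' j.
Proof. intros H. unfold iterate. rewrite (hist_dep j s s' H). reflexivity. Qed.


Hypothesis hsym : forall i j, (i < n)%nat -> (j < n)%nat -> A i j = A j i.

Lemma matvec_ext v w i : (forall r, (r < n)%nat -> v r = w r) -> matvec n A v i = matvec n A w i.
Proof. intros H. unfold matvec. apply rsum_ext. intros r Hr. rewrite H by exact Hr. reflexivity. Qed.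

Lemma matvec_plus_ebasis v c p i : (p < n)%nat ->
  matvec n A (fun r => v r + c * ebasis p r) i = matvec n A v i + c * A i p.
Proof.
  intros Hp. unfold matvec.
  rewrite (rsum_ext _ _ (fun r => A i r * v r + c * (ebasis p r * A i r))) by (intros; ring).
  rewrite rsum_plus, rsum_scal, rsum_ebasis_lt by exact Hp. reflexivity.
Qed.

Lemma matvec_sub v w i : matvec n A (fun r => v r - w r) i = matvec n A v i - matvec n A w i.
Proof. unfold matvec. rewrite <- rsum_minus. apply rsum_ext. intros; ring. Qed.

Lemma matvec_scal c v i : matvec n A (fun r => c * v r) i = c * matvec n A v i.
Proof. unfold matvec. rewrite <- rsum_scal. apply rsum_ext. intros; ring. Qed.

Lemma sym_sum v p : (p < n)%nat -> rsum n (fun i => v i * A i p) = matvec n A v p.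
Proof. intros Hp. unfold matvec. apply rsum_ext. intros i Hi. rewrite (hsym i p) by assumption. ring. Qed.

Lemma normA2_upd v c p : (p < n)%nat ->
  normA2 n A (fun r => v r + c * ebasis p r) =
  normA2 n A v + 2 * c * matvec n A v p + c * c * A p p.
Proof.
  intros Hp. unfold normA2, inprodA.
  rewrite (rsum_ext _ _ (fun i => v i * matvec n A v i + c * (v i * A i p)
      + c * (ebasis p i * matvec n A v i) + c * c * (ebasis p i * A i p))).
  2:{ intros i Hi. rewrite matvec_plus_ebasis by exact Hp. ring. }
  rewrite !rsum_plus, !rsum_scal, sym_sum by exact Hp.
  rewrite !rsum_ebasis_lt by exact Hp. fold (normA2 n A v). unfold normA2, inprodA. ring.
Qed.

Definition errv s j : nat -> R := fun r => X s j r - xstar r.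

Lemma errv_dep j s s' : (forall i, (i < j)%nat -> s i = s' i) -> errv s j = errv s' j.
Proof. intros H. unfold errv. rewrite (X_dep j s s' H). reflexivity. Qed.

Lemma err_step s j : (s j < n)%nat -> errv s (S j) =
  fun r => errv s j r + (- matvec n A (errv s (k j)) (s j)) * ebasis (s j) r.
Proof.
  intros Hp. unfold errv at 1. rewrite X_step. apply functional_extensionality; intro r.
  unfold inprodA. rewrite rsum_ebasis_lt by exact Hp.
  rewrite (matvec_ext _ (fun r => (-1) * errv s (k j) r)).
  2:{ intros. unfold errv. ring. }
  rewrite matvec_scal. unfold errv. ring.
Qed.

Lemma upd_agree s j p : forall i, (i < j)%nat -> upd s j p i = s i.
Proof. intros i Hi. unfold upd. destruct (Nat.eqb i j) eqn:E; [apply Nat.eqb_eq in E; lia|reflexivity]. Qed.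

Lemma upd_at s j p : upd s j p j = p.
Proof. unfold upd. rewrite Nat.eqb_refl. reflexivity. Qed.

Lemma err_step_upd s j p : (p < n)%nat -> errv (upd s j p) (S j) =
  fun r => errv s j r + (- matvec n A (errv s (k j)) p) * ebasis p r.
Proof.
  intros Hp. rewrite err_step by (rewrite upd_at; exact Hp). rewrite upd_at.
  rewrite (errv_dep j (upd s j p) s) by apply upd_agree.
  rewrite (errv_dep (k j) (upd s j p) s) by (intros; apply upd_agree; specialize (hk j); lia).
  reflexivity.
Qed.
End Iter.

Module M3.

Lemma Rdiv_le_0_compat a b : 0 <= a -> 0 < b -> 0 <= a / b.
Proof. intros. unfold Rdiv. apply Rmult_le_pos; [lra| left; apply Rinv_0_lt_compat; lra]. Qed.

Definition sqn (n : nat) (v : nat -> R) := rsum n (fun i => v i * v i).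

Lemma rmax_ge K f l : (l <= K)%nat -> f l <= rmax_upto K f.
Proof.
  induction K; intros Hl; simpl.
  - assert (l = 0%nat) by lia. subst. lra.
  - destruct (Nat.eq_dec l (S K)) as [->|Hne].
    + apply Rmax_r.
    + eapply Rle_trans; [apply IHK; lia| apply Rmax_l].
Qed.

Lemma argmax m (f : nat -> R) : exists p, (p <= m)%nat /\ forall i, (i <= m)%nat -> f i <= f p.
Proof.
  induction m.
  - exists 0%nat. split; [lia|]. intros i Hi. assert (i = 0%nat) by lia. subst; lra.
  - destruct IHm as [p [Hp Hf]].
    destruct (Rle_dec (f p) (f (S m))) as [Hle|Hgt].
    + exists (S m). split; [lia|]. intros i Hi.
      destruct (Nat.eq_dec i (S m)) as [->|Hne]; [lra|]. eapply Rle_trans; [apply Hf; lia|exact Hle].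
    + exists p. split; [lia|]. intros i Hi.
      destruct (Nat.eq_dec i (S m)) as [->|Hne]; [lra|]. apply Hf; lia.
Qed.

Section Main.
Variable n : nat.
Hypothesis hn : (2 <= n)%nat.
Variable A : nat -> nat -> R.
Hypothesis hsym : forall i j, (i < n)%nat -> (j < n)%nat -> A i j = A j i.
Hypothesis hpd : forall v : nat -> R, (exists i, (i < n)%nat /\ v i <> 0) -> 0 < normA2 n A v.
Hypothesis hdiag : forall i, (i < n)%nat -> A i i = 1.
Variables lmin lmax : R.
Hypothesis hlmin : is_eigenvalue n A lmin.
Hypothesis hlmax : is_eigenvalue n A lmax.
Hypothesis hspec : forall lam, is_eigenvalue n A lam -> lmin <= lam <= lmax.

Lemma sqn_nonneg v : 0 <= sqn n v.
Proof. unfold sqn. apply rsum_nonneg. intros. nra. Qed.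

Lemma eig_rayleigh lam v : (forall i, (i < n)%nat -> matvec n A v i = lam * v i) ->
  normA2 n A v = lam * sqn n v.
Proof.
  intros H. unfold normA2, inprodA, sqn. rewrite <- rsum_scal. apply rsum_ext.
  intros i Hi. rewrite H by exact Hi. ring.
Qed.

Lemma lmin_pos : 0 < lmin.
Proof.
  destruct hlmin as [v [[i [Hi Hv]] Hev]].
  assert (H1 : 0 < normA2 n A v) by (apply hpd; exists i; auto).
  rewrite (eig_rayleigh lmin v Hev) in H1.
  assert (H2 : 0 < sqn n v).
  { unfold sqn. apply (rsum_pos _ _ i); auto. intros; nra.
    assert (v i * v i > 0) by (apply Rsqr_pos_lt in Hv; unfold Rsqr in Hv; lra). lra. }
  nra.
Qed.

Lemma spec_bounds v :
  lmin * normA2 n A v <= sqn n (matvec n A v) /\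
  sqn n (matvec n A v) <= lmax * normA2 n A v /\
  normA2 n A v <= lmax * sqn n v /\ 0 <= normA2 n A v.
Proof.
  pose proof lmin_pos as Hl.
  destruct (Spec.spec_ok n A lmin lmax hsym hspec v) as [c [d [Hcd [H1 [H2 H3]]]]].
  unfold sqn. rewrite H1, H2, H3. rewrite <- !rsum_scal.
  repeat split.
  - apply rsum_le. intros j Hj. destruct (Hcd j Hj) as [Hc [Hd1 Hd2]].
    assert (0 <= d j * c j * (d j - lmin)). { apply Rmult_le_pos; [apply Rmult_le_pos|]; lra. }
    nra.
  - apply rsum_le. intros j Hj. destruct (Hcd j Hj) as [Hc [Hd1 Hd2]].
    assert (0 <= d j * c j * (lmax - d j)). { apply Rmult_le_pos; [apply Rmult_le_pos|]; lra. }
    nra.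
  - apply rsum_le. intros j Hj. destruct (Hcd j Hj) as [Hc [Hd1 Hd2]].
    assert (0 <= c j * (lmax - d j)). { apply Rmult_le_pos; lra. }
    nra.
  - apply rsum_nonneg. intros j Hj. destruct (Hcd j Hj) as [Hc [Hd1 Hd2]].
    apply Rmult_le_pos; lra.
Qed.

Lemma lmax_pos : 0 < lmax.
Proof. pose proof lmin_pos. destruct (hspec lmin hlmin). lra. Qed.

Lemma offdiag_lt p q : (p < n)%nat -> (q < n)%nat -> p <> q -> Rabs (A p q) < 1.
Proof.
  intros Hp Hq Hpq.
  set (v := fun r => ebasis p r + (- A p q) * ebasis q r).
  assert (Hv : 0 < normA2 n A v).
  { apply hpd. exists p. split; auto. unfold v, ebasis. rewrite Nat.eqb_refl.
    destruct (Nat.eqb p q) eqn:E; [apply Nat.eqb_eq in E; lia|]. lra. }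
  unfold v in Hv. rewrite normA2_upd in Hv by auto.
  assert (He : normA2 n A (ebasis p) = 1).
  { replace (ebasis p) with (fun r => (fun _ : nat => 0) r + 1 * ebasis p r)
      by (apply functional_extensionality; intro; ring).
    rewrite normA2_upd by auto. rewrite hdiag by auto.
    assert (Z1 : forall i, matvec n A (fun _ => 0) i = 0).
    { intros i. unfold matvec. rewrite (rsum_ext n _ (fun _ => 0)) by (intros; ring).
      rewrite rsum_const. ring. }
    assert (Z2 : normA2 n A (fun _ => 0) = 0).
    { unfold normA2, inprodA. rewrite (rsum_ext n _ (fun _ => 0)) by (intros; ring).
      rewrite rsum_const. ring. }
    rewrite Z1, Z2. ring. }
  rewrite He in Hv.
  assert (Hm : matvec n A (ebasis p) q = A p q).
  { unfold matvec. rewrite rsum_ebasis_r by auto. apply hsym; auto. }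
  rewrite Hm, (hdiag q Hq) in Hv.
  assert (A p q * A p q < 1) by nra.
  apply Rabs_def1; nra.
Qed.

Lemma gersh : lmax <= norm_inf n A /\ lmax < INR n.
Proof.
  destruct hlmax as [v [[i0 [Hi0 Hv0]] Hev]].
  destruct (argmax (n - 1) (fun i => Rabs (v i))) as [p [Hp Hmax]].
  assert (Hpn : (p < n)%nat) by lia.
  assert (Hvp : 0 < Rabs (v p)).
  { assert (Rabs (v i0) <= Rabs (v p)) by (apply Hmax; lia).
    assert (0 < Rabs (v i0)) by (apply Rabs_pos_lt; auto). lra. }
  set (rs := rsum n (fun r => Rabs (A p r))).
  assert (Hrs : Rabs lmax <= rs).
  { assert (H1 : Rabs lmax * Rabs (v p) <= rs * Rabs (v p)).
    { rewrite <- Rabs_mult. rewrite <- (Hev p Hpn). unfold matvec.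
      eapply Rle_trans; [apply rsum_abs|]. unfold rs. rewrite Rmult_comm, <- rsum_scal.
      apply rsum_le. intros r Hr. rewrite Rabs_mult.
      assert (Rabs (v r) <= Rabs (v p)) by (apply Hmax; lia).
      pose proof (Rabs_pos (A p r)). nra. }
    apply Rmult_le_reg_r with (Rabs (v p)); auto. }
  split.
  - eapply Rle_trans; [apply Rle_abs|]. eapply Rle_trans; [exact Hrs|].
    unfold norm_inf, rs. apply (rmax_ge (n - 1) (fun l => rsum n (fun r => Rabs (A l r))) p). lia.
  - assert (Hlt : rs < INR n).
    { assert (exists q, (q < n)%nat /\ q <> p) as [q [Hq Hqp]].
      { destruct (Nat.eq_dec p 0) as [->|Hne]; [exists 1%nat|exists 0%nat]; split; lia. }
      assert (0 < rsum n (fun r => 1 - Rabs (A p r))).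
      { apply (rsum_pos _ _ q).
        - intros r Hr. destruct (Nat.eq_dec r p) as [->|Hne].
          + rewrite hdiag by auto. rewrite Rabs_R1. lra.
          + pose proof (offdiag_lt p r Hpn Hr (fun h => Hne (eq_sym h))). lra.
        - exact Hq.
        - pose proof (offdiag_lt p q Hpn Hq (fun h => Hqp (eq_sym h))). lra. }
      rewrite rsum_minus, rsum_const in H. unfold rs. lra. }
    pose proof (Rle_abs lmax). lra.
Qed.


Hypothesis hn1 : (1 <= n)%nat.
Variables xstar x0 : nat -> R.
Variable k : nat -> nat.
Variable tau : nat.
Hypothesis hk : forall j, (j <= k j + tau)%nat /\ (k j <= j)%nat.

Lemma hk' : forall j, (k j <= j)%nat.
Proof. intros j. apply hk. Qed.

Definition err s j := errv n A xstar x0 k s j.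
Definition En j := Em n A xstar x0 1 k j.
Definition Rn a := expect_seq n a (fun s => sqn n (matvec n A (err s a))).

Lemma En_def j : En j = expect_seq n j (fun s => normA2 n A (err s j)).
Proof. reflexivity. Qed.

Lemma err_dep a j (G : (nat -> R) -> R) : (a <= j)%nat -> dep_below j (fun s => G (err s a)).
Proof.
  intros Ha s s' H. unfold err. rewrite (errv_dep n A xstar x0 k a s s'); [reflexivity|].
  intros; apply H; lia.
Qed.

Lemma En_nonneg j : 0 <= En j.
Proof.
  rewrite En_def. rewrite <- (Ex_const n hn1 j 0). apply Ex_le; [exact hn1|].
  intros s. apply spec_bounds.
Qed.

Lemma Rn_nonneg a : 0 <= Rn a.
Proof.
  unfold Rn. rewrite <- (Ex_const n hn1 a 0). apply Ex_le; [exact hn1|].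
  intros s. apply sqn_nonneg.
Qed.

Lemma Rn_le a : Rn a <= lmax * En a.
Proof.
  unfold Rn. rewrite En_def, <- Ex_scal by exact hn1. apply Ex_le; [exact hn1|].
  intros s. apply spec_bounds.
Qed.

Lemma Rn_ge a : lmin * En a <= Rn a.
Proof.
  unfold Rn. rewrite En_def, <- Ex_scal by exact hn1. apply Ex_le; [exact hn1|].
  intros s. apply spec_bounds.
Qed.

Lemma avg_eq s j :
  / INR n * rsum n (fun p => normA2 n A (err (upd s j p) (S j))) =
  normA2 n A (err s j) + / INR n * rsum n (fun p =>
     -2 * matvec n A (err s (k j)) p * matvec n A (err s j) p
     + matvec n A (err s (k j)) p * matvec n A (err s (k j)) p).
Proof.
  rewrite (rsum_ext n _ (fun p => normA2 n A (err s j) + (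
     -2 * matvec n A (err s (k j)) p * matvec n A (err s j) p
     + matvec n A (err s (k j)) p * matvec n A (err s (k j)) p))).
  - rewrite rsum_plus, rsum_const. field. apply Rgt_not_eq. apply lt_0_INR. lia.
  - intros p Hp. unfold err. rewrite (err_step_upd n A xstar x0 k hk' s j p Hp).
    rewrite (normA2_upd n A hsym) by exact Hp. rewrite hdiag by exact Hp. ring.
Qed.

Lemma step_lower j : (1 - lmax / INR n) * En j <= En (S j).
Proof.
  rewrite !En_def, Ex_step by exact hn1.
  rewrite <- Ex_scal by exact hn1. apply Ex_le; [exact hn1|]. intros s.
  rewrite avg_eq.
  set (a := matvec n A (err s (k j))). set (b := matvec n A (err s j)).
  assert (H1 : - sqn n b <= rsum n (fun p => -2 * a p * b p + a p * a p)).
  { unfold sqn. rewrite <- (Rmult_1_l (rsum n (fun i => b i * b i))).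
    rewrite Ropp_mult_distr_l, <- rsum_scal. apply rsum_le. intros p _. pose proof (Rle_0_sqr (a p - b p)). unfold Rsqr in *. lra. }
  destruct (spec_bounds (err s j)) as [_ [H2 _]]. fold b in H2.
  assert (Hn : 0 < / INR n) by (apply Rinv_0_lt_compat, lt_0_INR; lia).
  assert (/ INR n * (- sqn n b) <= / INR n * rsum n (fun p => -2 * a p * b p + a p * a p))
    by (apply Rmult_le_compat_l; lra).
  assert (/ INR n * sqn n b <= / INR n * (lmax * normA2 n A (err s j)))
    by (apply Rmult_le_compat_l; lra).
  replace ((1 - lmax / INR n) * normA2 n A (err s j)) with
    (normA2 n A (err s j) - / INR n * (lmax * normA2 n A (err s j)))
    by (field; apply Rgt_not_eq, lt_0_INR; lia).
  lra.
Qed.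


Lemma telescope (f : nat -> R) j M : (M <= j)%nat ->
  f j - f (j - M)%nat = rsum M (fun d => f (j - d)%nat - f (j - d - 1)%nat).
Proof.
  induction M; intros HM.
  - simpl. rewrite Nat.sub_0_r. ring.
  - simpl. rewrite <- IHM by lia. replace (j - S M)%nat with (j - M - 1)%nat by lia. ring.
Qed.

Definition Delta j l s := rsum n (fun p => matvec n A (err s (k j)) p *
   (matvec n A (err s (S l)) p - matvec n A (err s l) p)).

Lemma cross_telescope s j :
  rsum n (fun p => matvec n A (err s (k j)) p *
     (matvec n A (err s j) p - matvec n A (err s (k j)) p)) =
  rsum (j - k j) (fun d => Delta j (j - d - 1) s).
Proof.
  set (f := fun l => rsum n (fun p => matvec n A (err s (k j)) p * matvec n A (err s l) p)).
  transitivity (f j - f (j - (j - k j))%nat).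
  - replace (j - (j - k j))%nat with (k j) by (pose proof (hk' j); lia).
    unfold f. rewrite <- rsum_minus. apply rsum_ext. intros; ring.
  - rewrite telescope by lia. apply rsum_ext. intros d Hd.
    unfold f, Delta. rewrite <- rsum_minus.
    set (l := (j - d - 1)%nat). replace (j - d)%nat with (S l) by (unfold l; lia).
    apply rsum_ext. intros; ring.
Qed.

Lemma Delta_upd s j l q : (k j <= l)%nat -> (q < n)%nat ->
  Delta j l (upd s l q) = - matvec n A (err s (k l)) q * matvec n A (matvec n A (err s (k j))) q.
Proof.
  intros Hl Hq. unfold Delta, err.
  rewrite (err_step_upd n A xstar x0 k hk' s l q Hq).
  rewrite (errv_dep n A xstar x0 k l (upd s l q) s) by (apply upd_agree).
  rewrite (errv_dep n A xstar x0 k (k j) (upd s l q) s) by (intros; apply upd_agree; lia).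
  rewrite (rsum_ext n _ (fun p => (- matvec n A (errv n A xstar x0 k s (k l)) q) *
        (matvec n A (errv n A xstar x0 k s (k j)) p * A p q))).
  - rewrite rsum_scal, (sym_sum n A hsym) by exact Hq. reflexivity.
  - intros p Hp. rewrite (matvec_plus_ebasis n A) by exact Hq. ring.
Qed.

Lemma Delta_dep j l : (k j <= l)%nat -> dep_below (S l) (Delta j l).
Proof.
  intros Hl s s' H. unfold Delta, err.
  rewrite (errv_dep n A xstar x0 k (k j) s s') by (intros; apply H; lia).
  rewrite (errv_dep n A xstar x0 k (S l) s s') by (intros; apply H; lia).
  rewrite (errv_dep n A xstar x0 k l s s') by (intros; apply H; lia).
  reflexivity.
Qed.

Lemma amgm u w : - (lmax / 2 * (u * u) + / (2 * lmax) * (w * w)) <= - u * w.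
Proof.
  pose proof lmax_pos as Hl.
  assert (H : 0 <= (lmax * u - w) * (lmax * u - w) * / (2 * lmax)).
  { apply Rmult_le_pos; [apply Rle_0_sqr|]. left. apply Rinv_0_lt_compat. lra. }
  replace ((lmax * u - w) * (lmax * u - w) * / (2 * lmax)) with
    (lmax / 2 * (u * u) + / (2 * lmax) * (w * w) - u * w) in H by (field; lra).
  lra.
Qed.

Lemma Delta_bound j l : (k j <= l)%nat ->
  - (lmax / (2 * INR n)) * (Rn (k l) + Rn (k j)) <= expect_seq n (S l) (Delta j l).
Proof.
  intros Hl. pose proof lmax_pos as Hlm.
  assert (Hn : 0 < INR n) by (apply lt_0_INR; lia).
  rewrite Ex_step by exact hn1.
  unfold Rn.
  rewrite <- (Ex_lift' n hn1 (k l) l (fun s => sqn n (matvec n A (err s (k l))))) by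
    (first [apply (err_dep (k l) (k l) (fun v => sqn n (matvec n A v))); lia | apply hk']).
  rewrite <- (Ex_lift' n hn1 (k j) l (fun s => sqn n (matvec n A (err s (k j))))) by
    (first [apply (err_dep (k j) (k j) (fun v => sqn n (matvec n A v))); lia | lia]).
  rewrite <- Ex_plus, <- Ex_scal by exact hn1.
  apply Ex_le; [exact hn1|]. intros s.
  rewrite (rsum_ext n _ (fun q => - matvec n A (err s (k l)) q * matvec n A (matvec n A (err s (k j))) q))
    by (intros q Hq; apply Delta_upd; assumption).
  set (u := matvec n A (err s (k l))). set (a := matvec n A (err s (k j))).
  set (w := matvec n A a).
  assert (H1 : - (lmax / 2 * sqn n u + / (2 * lmax) * sqn n w) <= rsum n (fun q => - u q * w q)).
  { unfold sqn. rewrite <- !rsum_scal, <- rsum_plus.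
    rewrite <- (Rmult_1_l (rsum _ _)), Ropp_mult_distr_l, <- rsum_scal.
    apply rsum_le. intros q _. pose proof (amgm (u q) (w q)). lra. }
  destruct (spec_bounds a) as [_ [Hw1 [Hw2 _]]]. fold w in Hw1.
  assert (H2 : / (2 * lmax) * sqn n w <= lmax / 2 * sqn n a).
  { assert (sqn n w <= lmax * (lmax * sqn n a)) by nra.
    apply Rmult_le_reg_l with (2 * lmax); [lra|].
    replace (2 * lmax * (/ (2 * lmax) * sqn n w)) with (sqn n w) by (field; lra).
    nra. }
  assert (H3 : - (lmax / 2) * (sqn n u + sqn n a) <= rsum n (fun q => - u q * w q)) by lra.
  replace (- (lmax / (2 * INR n)) * (sqn n u + sqn n a)) with
     (/ INR n * (- (lmax / 2) * (sqn n u + sqn n a))) by (field; lra).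
  apply Rmult_le_compat_l; [left; apply Rinv_0_lt_compat; lra| exact H3].
Qed.

Lemma step_upper j : En (S j) <= En j - / INR n * Rn (k j) +
  lmax / (INR n * INR n) * rsum (j - k j) (fun d => Rn (k (j - d - 1)%nat) + Rn (k j)).
Proof.
  assert (Hn : 0 < INR n) by (apply lt_0_INR; lia).
  rewrite !En_def, Ex_step by exact hn1.
  set (M := (j - k j)%nat).
  rewrite (Ex_ext n j _ (fun s => normA2 n A (err s j) +
      (- / INR n * sqn n (matvec n A (err s (k j))) +
       (-2 / INR n) * rsum M (fun d => Delta j (j - d - 1) s)))).
  2:{ intros s. rewrite avg_eq. unfold M. rewrite <- cross_telescope.
      set (a := matvec n A (err s (k j))). set (b := matvec n A (err s j)).
      rewrite (rsum_ext n _ (fun p => (-1) * (a p * a p) + (-2) * (a p * (b p - a p))))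
        by (intros; ring).
      rewrite rsum_plus, !rsum_scal. unfold sqn. field. lra. }
  rewrite !Ex_plus, !Ex_scal, Ex_rsum by exact hn1.
  assert (HR : expect_seq n j (fun s => sqn n (matvec n A (err s (k j)))) = Rn (k j)).
  { unfold Rn. apply (Ex_lift' n hn1 (k j) j).
    - apply (err_dep (k j) (k j) (fun v => sqn n (matvec n A v))); lia.
    - apply hk'. }
  rewrite HR.
  set (SR := rsum M (fun d => Rn (k (j - d - 1)%nat) + Rn (k j))).
  set (SE := rsum M (fun d => expect_seq n j (Delta j (j - d - 1)))).
  assert (HD : - (lmax / (2 * INR n)) * SR <= SE).
  { unfold SR, SE. rewrite <- rsum_scal. apply rsum_le. intros d Hd.
    rewrite (Ex_lift' n hn1 (S (j - d - 1)) j).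
    - apply Delta_bound. unfold M in Hd. lia.
    - apply Delta_dep. unfold M in Hd. lia.
    - unfold M in Hd. lia. }
  assert (H2 : (-2 / INR n) * SE <= (-2 / INR n) * (- (lmax / (2 * INR n)) * SR)).
  { apply Rmult_le_compat_neg_l; [|exact HD]. unfold Rdiv.
    assert (0 < / INR n) by (apply Rinv_0_lt_compat; lra). lra. }
  replace ((-2 / INR n) * (- (lmax / (2 * INR n)) * SR)) with (lmax / (INR n * INR n) * SR)
    in H2 by (field; lra).
  lra.
Qed.

Definition Rk l := Rn (k l).
Definition gw j d := if Nat.leb (S d) j then Rk (j - d - 1)%nat else 0.
Definition G j := rsum tau (fun d => gw j d).
Definition ind t j : R := if Nat.leb t j then 1 else 0.
Definition pind t l : R := if (Nat.ltb l t && Nat.leb t (l + tau))%bool then 1 else 0.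
Definition cc := lmax / (INR n * INR n).

Lemma Rk_nonneg l : 0 <= Rk l.
Proof. apply Rn_nonneg. Qed.

Lemma gw_nonneg j d : 0 <= gw j d.
Proof. unfold gw. destruct (Nat.leb (S d) j); [apply Rk_nonneg|lra]. Qed.

Lemma cc_pos : 0 <= cc.
Proof.
  unfold cc. pose proof lmax_pos. assert (0 < INR n) by (apply lt_0_INR; lia).
  apply Rmult_le_pos; [lra|]. left. apply Rinv_0_lt_compat. nra.
Qed.

Lemma step2 j : En (S j) <= En j - (/ INR n - cc * INR tau) * Rk j + cc * G j.
Proof.
  pose proof (step_upper j) as H. fold cc in H.
  rewrite rsum_plus, rsum_const in H.
  assert (H1 : rsum (j - k j) (fun d => Rn (k (j - d - 1)%nat)) <= G j).
  { unfold G. apply rsum_extend.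
    - pose proof (hk j). lia.
    - intros d Hd. unfold gw. replace (Nat.leb (S d) j) with true
        by (symmetry; apply Nat.leb_le; lia). reflexivity.
    - intros; apply gw_nonneg. }
  assert (H2 : INR (j - k j) * Rn (k j) <= INR tau * Rk j).
  { apply Rmult_le_compat_r; [apply Rk_nonneg|]. apply le_INR. pose proof (hk j). lia. }
  pose proof cc_pos.
  assert (cc * (rsum (j - k j) (fun d => Rn (k (j - d - 1)%nat)) + INR (j - k j) * Rn (k j))
    <= cc * (G j + INR tau * Rk j)) by (apply Rmult_le_compat_l; lra).
  unfold Rk in *. lra.
Qed.

Lemma window_raw t d : En (t + d) <= En t - (/ INR n - cc * INR tau) * rsum (t + d) (fun j => ind t j * Rk j)
   + cc * rsum (t + d) (fun j => ind t j * G j).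
Proof.
  induction d.
  - rewrite Nat.add_0_r.
    rewrite (rsum_ext t (fun j => ind t j * Rk j) (fun _ => 0)).
    2:{ intros j Hj. unfold ind. replace (Nat.leb t j) with false by (symmetry; apply Nat.leb_gt; lia). ring. }
    rewrite (rsum_ext t (fun j => ind t j * G j) (fun _ => 0)).
    2:{ intros j Hj. unfold ind. replace (Nat.leb t j) with false by (symmetry; apply Nat.leb_gt; lia). ring. }
    rewrite rsum_const. lra.
  - rewrite Nat.add_succ_r. simpl rsum.
    assert (Hi : ind t (t + d) = 1) by (unfold ind; replace (Nat.leb t (t + d)) with true by (symmetry; apply Nat.leb_le; lia); reflexivity).
    rewrite Hi. pose proof (step2 (t + d)). lra.
Qed.

Lemma reindex t d m : rsum m (fun j => ind t j * gw j d) =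
  rsum (m - S d) (fun l => ind t (l + S d) * Rk l).
Proof.
  induction m.
  - simpl. reflexivity.
  - simpl rsum at 1. rewrite IHm. unfold gw.
    destruct (Nat.leb (S d) m) eqn:E.
    + apply Nat.leb_le in E. replace (S m - S d)%nat with (S (m - S d)) by lia.
      simpl rsum. replace (m - S d + S d)%nat with m by lia.
      replace (m - d - 1)%nat with (m - S d)%nat by lia. reflexivity.
    + apply Nat.leb_gt in E. replace (S m - S d)%nat with (m - S d)%nat by lia. ring.
Qed.

Lemma G_sum_bound t m : rsum m (fun j => ind t j * G j) <=
  INR tau * (rsum m (fun l => ind t l * Rk l) + rsum m (fun l => pind t l * Rk l)).
Proof.
  unfold G.
  rewrite (rsum_ext m _ (fun j => rsum tau (fun d => ind t j * gw j d)))
    by (intros; rewrite rsum_scal; reflexivity).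
  rewrite rsum_swap. rewrite <- rsum_plus, <- rsum_const.
  apply rsum_le. intros d Hd. rewrite reindex.
  apply Rle_trans with (rsum (m - S d) (fun l => ind t l * Rk l + pind t l * Rk l)).
  - apply rsum_le. intros l Hl. pose proof (Rk_nonneg l).
    assert (ind t (l + S d) <= ind t l + pind t l).
    { unfold ind, pind.
      destruct (Nat.leb t (l + S d)) eqn:E1; destruct (Nat.leb t l) eqn:E2;
      destruct (Nat.ltb l t) eqn:E3; destruct (Nat.leb t (l + tau)) eqn:E4; simpl;
      try lra.
      all: apply Nat.leb_le in E1 || apply Nat.leb_gt in E1;
           apply Nat.leb_le in E2 || apply Nat.leb_gt in E2;
           apply Nat.ltb_lt in E3 || apply Nat.ltb_ge in E3;
           apply Nat.leb_le in E4 || apply Nat.leb_gt in E4; lia. }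
    nra.
  - apply rsum_extend; [lia|reflexivity|].
    intros l _. pose proof (Rk_nonneg l).
    assert (0 <= ind t l) by (unfold ind; destruct (Nat.leb t l); lra).
    assert (0 <= pind t l) by (unfold pind; destruct (_ && _)%bool; lra). nra.
Qed.

Definition rho := / INR n * norm_inf n A.
Definition nu := 1 - 2 * rho * INR tau.
Definition q := 1 - lmax / INR n.

Lemma q_bounds : 0 < q /\ q < 1.
Proof.
  unfold q. destruct gersh as [_ H]. pose proof lmax_pos.
  assert (0 < INR n) by (apply lt_0_INR; lia).
  split.
  - assert (lmax / INR n < 1).
    { apply Rmult_lt_reg_r with (INR n); auto. unfold Rdiv. rewrite Rmult_assoc, Rinv_l by lra. lra. }
    lra.
  - assert (0 < lmax / INR n) by (apply Rdiv_lt_0_compat; lra). lra.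
Qed.

Lemma cc_le : cc <= rho / INR n.
Proof.
  unfold cc, rho. destruct gersh as [H _].
  assert (0 < INR n) by (apply lt_0_INR; lia).
  unfold Rdiv. rewrite Rinv_mult.
  assert (0 < / INR n) by (apply Rinv_0_lt_compat; lra).
  assert (lmax * (/ INR n * / INR n) <= norm_inf n A * (/ INR n * / INR n))
    by (apply Rmult_le_compat_r; [nra|lra]).
  nra.
Qed.

Lemma ind_nonneg t j : 0 <= ind t j.
Proof. unfold ind; destruct (Nat.leb t j); lra. Qed.
Lemma pind_nonneg t j : 0 <= pind t j.
Proof. unfold pind; destruct (_ && _)%bool; lra. Qed.

Definition Ssum t m := rsum m (fun j => ind t j * Rk j).
Definition Psum t m := rsum m (fun l => pind t l * Rk l).

Lemma Ssum_nonneg t m : 0 <= Ssum t m.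
Proof. apply rsum_nonneg. intros. pose proof (ind_nonneg t i). pose proof (Rk_nonneg i). nra. Qed.
Lemma Psum_nonneg t m : 0 <= Psum t m.
Proof. apply rsum_nonneg. intros. pose proof (pind_nonneg t i). pose proof (Rk_nonneg i). nra. Qed.

Lemma window t m : (t <= m)%nat ->
  En m <= En t - (nu / INR n) * Ssum t m + (rho * INR tau / INR n) * Psum t m.
Proof.
  intros Htm. replace m with (t + (m - t))%nat by lia.
  pose proof (window_raw t (m - t)) as H. replace (t + (m - t))%nat with m in * by lia.
  pose proof (G_sum_bound t m) as HG. fold (Ssum t m) (Psum t m) in HG.
  fold (Ssum t m) in H.
  pose proof cc_pos. pose proof cc_le. pose proof (Ssum_nonneg t m). pose proof (Psum_nonneg t m).
  pose proof (pos_INR tau).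
  assert (0 < INR n) by (apply lt_0_INR; lia).
  assert (HA1 : cc * rsum m (fun j => ind t j * G j) <= cc * (INR tau * (Ssum t m + Psum t m)))
    by (apply Rmult_le_compat_l; lra).
  assert (HA2 : cc * INR tau * (2 * Ssum t m + Psum t m) <= rho / INR n * INR tau * (2 * Ssum t m + Psum t m)).
  { apply Rmult_le_compat_r; [lra|]. apply Rmult_le_compat_r; lra. }
  unfold nu. unfold Rdiv in *.
  replace ((1 - 2 * rho * INR tau) * / INR n * Ssum t m) with
     (/ INR n * Ssum t m - rho * / INR n * INR tau * (2 * Ssum t m)) by ring.
  nra.
Qed.

Lemma pow_le1 x d : 0 <= x <= 1 -> x ^ d <= 1.
Proof.
  intros Hx. induction d; simpl; [lra|].
  assert (0 <= x ^ d) by (apply pow_le; lra). nra.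
Qed.

Lemma pow_anti x a b : 0 <= x <= 1 -> (a <= b)%nat -> x ^ b <= x ^ a.
Proof.
  intros Hx Hab. replace b with (a + (b - a))%nat by lia. rewrite pow_add.
  pose proof (pow_le1 x (b - a) Hx). assert (0 <= x ^ a) by (apply pow_le; lra). nra.
Qed.

Lemma En_pow a d : q ^ d * En a <= En (a + d).
Proof.
  induction d.
  - rewrite Nat.add_0_r. simpl. lra.
  - rewrite Nat.add_succ_r. pose proof (step_lower (a + d)) as H. fold q in H.
    destruct q_bounds. simpl.
    assert (q * (q ^ d * En a) <= q * En (a + d)) by (apply Rmult_le_compat_l; lra).
    lra.
Qed.

Lemma Rk_lower t j : (t <= k j)%nat -> lmin * (q ^ (j - t) * En t) <= Rk j.
Proof.
  intros Ht. unfold Rk. pose proof (Rn_ge (k j)) as H1.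
  pose proof (En_pow t (k j - t)) as H2. replace (t + (k j - t))%nat with (k j) in H2 by lia.
  destruct q_bounds. pose proof lmin_pos. pose proof (En_nonneg t).
  assert (q ^ (j - t) <= q ^ (k j - t)) by (apply pow_anti; [lra| pose proof (hk' j); lia]).
  assert (q ^ (j - t) * En t <= q ^ (k j - t) * En t) by (apply Rmult_le_compat_r; lra).
  assert (lmin * (q ^ (j - t) * En t) <= lmin * En (k j)) by (apply Rmult_le_compat_l; lra).
  lra.
Qed.

Lemma ind_sum a b f : rsum (a + b) (fun j => ind a j * f j) = rsum b (fun d => f (a + d)%nat).
Proof.
  induction b.
  - rewrite Nat.add_0_r. simpl. rewrite (rsum_ext a _ (fun _ => 0)).
    + rewrite rsum_const. ring.
    + intros j Hj. unfold ind. replace (Nat.leb a j) with false by (symmetry; apply Nat.leb_gt; lia). ring.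
  - rewrite Nat.add_succ_r. simpl. rewrite IHb. unfold ind.
    replace (Nat.leb a (a + b)) with true by (symmetry; apply Nat.leb_le; lia). ring.
Qed.

Lemma geom b : rsum b (fun d => q ^ d) * (1 - q) = 1 - q ^ b.
Proof. induction b; simpl; [ring|]. rewrite Rmult_plus_distr_r, IHb. ring. Qed.

Lemma S_lower t a b m : (t <= a)%nat -> (forall j, (a <= j)%nat -> (t <= k j)%nat) -> (a + b <= m)%nat ->
  lmin * En t * q ^ (a - t) * rsum b (fun d => q ^ d) <= Ssum t m.
Proof.
  intros Hta Hk Hm. destruct q_bounds. pose proof lmin_pos. pose proof (En_nonneg t).
  apply Rle_trans with (rsum (a + b) (fun j => ind a j * (lmin * (q ^ (j - t) * En t)))).
  - rewrite ind_sum. rewrite <- !rsum_scal. apply rsum_le. intros d Hd.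
    replace (a + d - t)%nat with ((a - t) + d)%nat by lia. rewrite pow_add. right. ring.
  - apply Rle_trans with (rsum (a + b) (fun j => ind t j * Rk j)).
    + apply rsum_le. intros j Hj. unfold ind.
      destruct (Nat.leb a j) eqn:E1.
      * apply Nat.leb_le in E1. replace (Nat.leb t j) with true by (symmetry; apply Nat.leb_le; lia).
        pose proof (Rk_lower t j (Hk j E1)). lra.
      * pose proof (Rk_nonneg j). destruct (Nat.leb t j); lra.
    + unfold Ssum. apply rsum_extend; [lia|reflexivity|].
      intros j _. pose proof (ind_nonneg t j). pose proof (Rk_nonneg j). nra.
Qed.

Lemma pind_count t m : rsum m (fun l => pind t l) = INR (Nat.min m t - (t - tau)).
Proof.
  induction m.
  - simpl. reflexivity.
  - simpl rsum. rewrite IHm. unfold pind.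
    destruct (Nat.ltb m t) eqn:E1; destruct (Nat.leb t (m + tau)) eqn:E2; cbn [andb];
    apply Nat.ltb_lt in E1 || apply Nat.ltb_ge in E1;
    apply Nat.leb_le in E2 || apply Nat.leb_gt in E2.
    + replace (Nat.min (S m) t - (t - tau))%nat with (S (Nat.min m t - (t - tau))) by lia.
      rewrite S_INR. ring.
    + replace (Nat.min (S m) t - (t - tau))%nat with (Nat.min m t - (t - tau))%nat by lia. ring.
    + replace (Nat.min (S m) t - (t - tau))%nat with (Nat.min m t - (t - tau))%nat by lia. ring.
    + replace (Nat.min (S m) t - (t - tau))%nat with (Nat.min m t - (t - tau))%nat by lia. ring.
Qed.

Lemma P_upper t m : Psum t m <= INR tau * (lmax * En t / q ^ (2 * tau)).
Proof.
  destruct q_bounds as [Hq0 Hq1]. pose proof lmax_pos. pose proof (En_nonneg t).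
  assert (Hq2 : 0 < q ^ (2 * tau)) by (apply pow_lt; lra).
  set (B := lmax * En t / q ^ (2 * tau)).
  assert (HB : 0 <= B) by (unfold B, Rdiv; apply Rmult_le_pos; [nra| left; apply Rinv_0_lt_compat; lra]).
  apply Rle_trans with (rsum m (fun l => pind t l * B)).
  - apply rsum_le. intros l Hl. unfold pind.
    destruct (Nat.ltb l t) eqn:E1; destruct (Nat.leb t (l + tau)) eqn:E2; simpl;
      try (pose proof (Rk_nonneg l); lra).
    apply Nat.ltb_lt in E1. apply Nat.leb_le in E2.
    rewrite !Rmult_1_l. unfold Rk.
    pose proof (Rn_le (k l)). pose proof (hk l) as [Hk1 Hk2].
    pose proof (En_pow (k l) (t - k l)) as HE. replace (k l + (t - k l))%nat with t in HE by lia.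
    assert (q ^ (2 * tau) <= q ^ (t - k l)) by (apply pow_anti; [lra|lia]).
    pose proof (En_nonneg (k l)).
    assert (q ^ (2 * tau) * En (k l) <= En t).
    { apply Rle_trans with (q ^ (t - k l) * En (k l)); [apply Rmult_le_compat_r; lra| exact HE]. }
    assert (En (k l) <= En t / q ^ (2 * tau)).
    { apply Rmult_le_reg_l with (q ^ (2 * tau)); [lra|].
      unfold Rdiv. replace (q ^ (2 * tau) * (En t * / q ^ (2 * tau))) with (En t) by (field; lra). lra. }
    unfold B. unfold Rdiv in *.
    assert (lmax * En (k l) <= lmax * (En t * / q ^ (2 * tau))) by (apply Rmult_le_compat_l; lra).
    lra.
  - rewrite (rsum_ext m _ (fun l => B * pind t l)) by (intros; ring).
    rewrite rsum_scal, pind_count.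
    assert (INR (Nat.min m t - (t - tau)) <= INR tau) by (apply le_INR; lia).
    nra.
Qed.

Lemma geom_half b : q ^ b <= 1 / 2 -> INR n / (2 * lmax) <= rsum b (fun d => q ^ d).
Proof.
  intros Hb. pose proof (geom b) as Hg. destruct q_bounds. pose proof lmax_pos.
  assert (0 < INR n) by (apply lt_0_INR; lia).
  assert (E : 1 - q = lmax / INR n) by (unfold q; ring).
  rewrite E in Hg.
  apply Rmult_le_reg_r with (lmax / INR n); [apply Rdiv_lt_0_compat; lra|].
  rewrite Hg. replace (INR n / (2 * lmax) * (lmax / INR n)) with (1 / 2) by (field; lra). lra.
Qed.

Lemma part_a m : 2 * rho * INR tau < 1 -> q ^ m <= 1 / 2 ->
  En m <= (1 - nu / (2 * (lmax / lmin))) * En 0.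
Proof.
  intros Hr Hqm. pose proof (window 0 m (Nat.le_0_l m)) as HW.
  assert (HP : Psum 0 m = 0).
  { unfold Psum. rewrite (rsum_ext m _ (fun _ => 0)); [rewrite rsum_const; ring|].
    intros l _. unfold pind. replace (Nat.ltb l 0) with false by (symmetry; apply Nat.ltb_ge; lia).
    simpl. ring. }
  rewrite HP in HW.
  pose proof (S_lower 0 0 m m (le_n 0) (fun j _ => Nat.le_0_l (k j)) (le_n m)) as HS.
  simpl in HS. pose proof (geom_half m Hqm) as HG.
  pose proof lmin_pos. pose proof lmax_pos. pose proof (En_nonneg 0).
  assert (0 < INR n) by (apply lt_0_INR; lia).
  assert (Hnu : 0 <= nu) by (unfold nu; lra).
  set (Gs := rsum m (fun d => q ^ d)) in *.
  assert (HH1 : lmin * En 0 * (INR n / (2 * lmax)) <= lmin * En 0 * 1 * Gs).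
  { rewrite Rmult_1_r. apply Rmult_le_compat_l; [nra|exact HG]. }
  assert (HH2 : nu / INR n * (lmin * En 0 * (INR n / (2 * lmax))) <= nu / INR n * Ssum 0 m).
  { apply Rmult_le_compat_l; [apply Rdiv_le_0_compat; lra| lra]. }
  replace ((1 - nu / (2 * (lmax / lmin))) * En 0) with
    (En 0 - nu / INR n * (lmin * En 0 * (INR n / (2 * lmax)))) by (field; lra).
  lra.
Qed.

Lemma block t m T0 : 2 * rho * INR tau < 1 -> q ^ T0 <= 1 / 2 -> (t + tau + T0 <= m)%nat ->
  En m <= (1 - nu * q ^ tau / (2 * (lmax / lmin)) +
           rho * INR tau ^ 2 * lmax * / (q ^ (2 * tau)) / INR n) * En t.
Proof.
  intros Hr HqT Hm. pose proof (window t m ltac:(lia)) as HW.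
  pose proof (S_lower t (t + tau) T0 m ltac:(lia)
     (fun j Hj => ltac:(pose proof (hk j); lia)) Hm) as HS.
  replace (t + tau - t)%nat with tau in HS by lia.
  pose proof (geom_half T0 HqT) as HG. pose proof (P_upper t m) as HP.
  pose proof lmin_pos. pose proof lmax_pos. pose proof (En_nonneg t).
  destruct q_bounds as [Hq0 Hq1].
  assert (Hqt : 0 < q ^ tau) by (apply pow_lt; lra).
  assert (Hq2 : 0 < q ^ (2 * tau)) by (apply pow_lt; lra).
  assert (0 < INR n) by (apply lt_0_INR; lia).
  assert (Hnu : 0 <= nu) by (unfold nu; lra).
  assert (Hrho : 0 <= rho).
  { unfold rho. destruct gersh as [Hg _]. apply Rmult_le_pos; [left; apply Rinv_0_lt_compat; lra|lra]. }
  pose proof (pos_INR tau).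
  set (Gs := rsum T0 (fun d => q ^ d)) in *.
  assert (HH1 : lmin * En t * q ^ tau * (INR n / (2 * lmax)) <= lmin * En t * q ^ tau * Gs).
  { apply Rmult_le_compat_l; [|exact HG]. apply Rmult_le_pos; [nra|lra]. }
  assert (HH2 : nu / INR n * (lmin * En t * q ^ tau * (INR n / (2 * lmax))) <= nu / INR n * Ssum t m).
  { apply Rmult_le_compat_l; [apply Rdiv_le_0_compat; lra| lra]. }
  assert (HH3 : rho * INR tau / INR n * Psum t m <=
               rho * INR tau / INR n * (INR tau * (lmax * En t / q ^ (2 * tau)))).
  { apply Rmult_le_compat_l; [apply Rdiv_le_0_compat; [nra|lra]|exact HP]. }
  replace ((1 - nu * q ^ tau / (2 * (lmax / lmin)) + rho * INR tau ^ 2 * lmax * / q ^ (2 * tau) / INR n) * En t)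
    with (En t - nu / INR n * (lmin * En t * q ^ tau * (INR n / (2 * lmax)))
          + rho * INR tau / INR n * (INR tau * (lmax * En t / q ^ (2 * tau))))
    by (field; repeat split; lra).
  lra.
Qed.

End Main.

End M3.
Import M3.

Lemma log_half (q : R) (m : nat) : 0 < q < 1 -> ln (1 / 2) / ln q <= INR m -> q ^ m <= 1 / 2.
Proof.
  intros [Hq0 Hq1] H.
  assert (Hl : ln q < 0) by (rewrite <- ln_1; apply ln_increasing; lra).
  assert (H2 : INR m * ln q <= ln (1 / 2)).
  { replace (ln (1 / 2)) with (ln (1 / 2) / ln q * ln q) by (field; lra).
    apply Rmult_le_compat_neg_l with (r := ln q) in H; [|lra]. lra. }
  rewrite <- ln_pow in H2 by lra.
  destruct (Rle_or_lt (q ^ m) (1 / 2)) as [Hle|Hlt]; [exact Hle|].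
  exfalso. assert (ln (1 / 2) < ln (q ^ m)) by (apply ln_increasing; lra). lra.
Qed.

Lemma th_pos (q : R) : 0 < q < 1 -> 0 < ln (1 / 2) / ln q.
Proof.
  intros [Hq0 Hq1].
  assert (Hl : ln q < 0) by (rewrite <- ln_1; apply ln_increasing; lra).
  assert (Hh : ln (1 / 2) < 0) by (rewrite <- ln_1; apply ln_increasing; lra).
  unfold Rdiv. assert (/ ln q < 0) by (apply Rinv_lt_0_compat; lra). nra.
Qed.

Lemma Rceil_ge (th : R) : 0 < th -> th <= INR (Z.to_nat (Rceil th)).
Proof.
  intros Hth. unfold Rceil. destruct (archimed (- th)) as [H1 H2].
  assert (Hz : th <= IZR (1 - up (- th))) by (rewrite minus_IZR; lra).
  assert (Hz0 : (0 <= 1 - up (- th))%Z) by (apply le_IZR; lra).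
  rewrite INR_IZR_INZ, Z2Nat.id by exact Hz0. exact Hz.
Qed.

Theorem theorem1
  (n : nat) (hn : (2 <= n)%nat)
  (A : nat -> nat -> R)
  (hsym : forall i j, (i < n)%nat -> (j < n)%nat -> A i j = A j i)
  (hpd : forall v : nat -> R, (exists i, (i < n)%nat /\ v i <> 0) -> 0 < normA2 n A v)
  (hdiag : forall i, (i < n)%nat -> A i i = 1)
  (b xstar : nat -> R)
  (hxstar : forall i, (i < n)%nat -> matvec n A xstar i = b i)
  (lmin lmax : R)
  (hlmin : is_eigenvalue n A lmin) (hlmax : is_eigenvalue n A lmax)
  (hspec : forall lam, is_eigenvalue n A lam -> lmin <= lam <= lmax)
  (x0 : nat -> R) (tau : nat) (k : nat -> nat)
  (hk : forall j, (j <= k j + tau)%nat /\ (k j <= j)%nat) :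
  let kappa := lmax / lmin in
  let rho := / INR n * norm_inf n A in
  let nu := 1 - 2 * rho * INR tau in
  let E := Em n A xstar x0 1 k in
  let q := 1 - lmax / INR n in
  2 * rho * INR tau < 1 ->
  (forall m : nat, ln (1 / 2) / ln q <= INR m ->
     E m <= (1 - nu / (2 * kappa)) * E O) /\
  (let T0 := Z.to_nat (Rceil (ln (1 / 2) / ln q)) in
   let T := (T0 + tau)%nat in
   let chi := rho * INR tau ^ 2 * lmax * / (q ^ (2 * tau)) / INR n in
   forall r m : nat, (1 <= r)%nat -> (r * T <= m)%nat ->
     E m <= (1 - nu / (2 * kappa))
            * (1 - nu * q ^ tau / (2 * kappa) + chi) ^ (r - 1) * E O).
Proof.
  intros kappa rho nu E q Hr.
  assert (hn1 : (1 <= n)%nat) by lia.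
  pose proof (q_bounds n hn A hsym hpd hdiag lmin lmax hlmin hlmax hspec hn1) as Hq.
  change (M3.q n lmax) with q in Hq.
  pose proof (part_a n hn A hsym hpd hdiag lmin lmax hlmin hlmax hspec hn1 xstar x0 k tau hk) as PA.
  pose proof (block n hn A hsym hpd hdiag lmin lmax hlmin hlmax hspec hn1 xstar x0 k tau hk) as BL.
  change (M3.q n lmax) with q in PA, BL. change (M3.rho n A) with rho in PA, BL.
  change (M3.nu n A tau) with nu in PA, BL.
  change (En n A xstar x0 k) with E in PA, BL.
  change (lmax / lmin) with kappa in PA, BL.
  split.
  - intros m Hm. exact (PA m Hr (log_half q m Hq Hm)).
  - intros T0 T chi r m Hr1 Hrm.
    assert (Hth := th_pos q Hq).
    assert (HT0' : ln (1 / 2) / ln q <= INR T0) by (apply Rceil_ge; exact Hth).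
    assert (HT0 : q ^ T0 <= 1 / 2) by (apply log_half; assumption).
    pose proof (lmin_pos n A hpd lmin hlmin) as Hlmin.
    pose proof (lmax_pos n A hpd lmin lmax hlmin hspec) as Hlmax.
    assert (Hmm : lmin <= lmax) by (apply hspec; exact hlmin).
    assert (Hn0 : 0 < INR n) by (apply lt_0_INR; lia).
    assert (Hrho : 0 <= rho).
    { unfold rho. apply Rmult_le_pos; [left; apply Rinv_0_lt_compat; lra|].
      unfold norm_inf. eapply Rle_trans;
        [|apply (rmax_ge (n - 1) (fun l => rsum n (fun r => Rabs (A l r))) 0); lia].
      apply rsum_nonneg. intros; apply Rabs_pos. }
    pose proof (pos_INR tau) as Htau.
    assert (Hnu0 : 0 <= nu) by (unfold nu; lra).
    assert (Hnu1 : nu <= 1) by (unfold nu; nra).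
    assert (Hk1 : 1 <= kappa) by (unfold kappa; apply (Rmult_le_reg_r lmin); [lra|]; unfold Rdiv; rewrite Rmult_assoc, Rinv_l by lra; lra).
    destruct Hq as [Hq0 Hq1].
    assert (Hqt : 0 < q ^ tau) by (apply pow_lt; lra).
    assert (Hqt1 : q ^ tau <= 1) by (apply pow_le1; lra).
    assert (Hq2 : 0 < q ^ (2 * tau)) by (apply pow_lt; lra).
    assert (Hchi : 0 <= chi).
    { unfold chi. unfold Rdiv. apply Rmult_le_pos; [|left; apply Rinv_0_lt_compat; lra].
      apply Rmult_le_pos; [|left; apply Rinv_0_lt_compat; lra].
      apply Rmult_le_pos; [|lra]. apply Rmult_le_pos; [lra|]. apply pow_le; lra. }
    assert (Hc2 : 0 <= 1 - nu * q ^ tau / (2 * kappa) + chi).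
    { assert (nu * q ^ tau / (2 * kappa) <= 1 / 2).
      { apply Rmult_le_reg_r with (2 * kappa); [lra|]. unfold Rdiv.
        rewrite Rmult_assoc, Rinv_l by lra. nra. }
      lra. }
    assert (Hc1 : 0 <= 1 - nu / (2 * kappa)).
    { assert (nu / (2 * kappa) <= 1 / 2).
      { apply Rmult_le_reg_r with (2 * kappa); [lra|]. unfold Rdiv.
        rewrite Rmult_assoc, Rinv_l by lra. nra. }
      lra. }
    destruct r as [|r']; [lia|]. replace (S r' - 1)%nat with r' by lia.
    revert m Hrm. induction r' as [|r' IH]; intros m Hrm.
    + simpl pow. rewrite Rmult_1_r. apply PA; [exact Hr|]. apply log_half; [lra|].
      eapply Rle_trans; [exact HT0'|]. apply le_INR. unfold T in Hrm. lia.
    + assert (HmT : (S r' * T <= m - T)%nat) by nia.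
      pose proof (IH ltac:(lia) (m - T)%nat HmT) as Ht.
      assert (Hb : (m - T + tau + T0 <= m)%nat) by (unfold T in *; nia).
      pose proof (BL (m - T)%nat m T0 Hr HT0 Hb) as HB. fold chi in HB.
      eapply Rle_trans; [exact HB|].
      assert (0 <= E 0%nat) by exact (En_nonneg n A hsym hpd lmin lmax hlmin hspec hn1 xstar x0 k 0%nat).
      simpl pow.
      replace ((1 - nu / (2 * kappa)) * ((1 - nu * q ^ tau / (2 * kappa) + chi) *
          (1 - nu * q ^ tau / (2 * kappa) + chi) ^ r') * E 0%nat) with
        ((1 - nu * q ^ tau / (2 * kappa) + chi) * ((1 - nu / (2 * kappa)) *
          (1 - nu * q ^ tau / (2 * kappa) + chi) ^ r' * E 0%nat)) by ring.
      apply Rmult_le_compat_l; [exact Hc2| exact Ht].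
Qed.
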